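(* Let $n,b$ be integers with $1<n<b$, let $C$ be an $(n,b)$-permutiple class with graph $G_C$, and suppose that the state $n-1$ is a vertex of $\Gamma_C$. Then the symmetric closure $\widehat{C}$ of $C$ is a symmetric class. Moreover, the following are equivalent: (1) $C$ is a symmetric class; (2) $C=\widehat{C}$; (3) $\Gamma_C$ is a symmetric subgraph of the $(n,b)$-Hoey-Sloane graph (i.e. $\overline{\Gamma}_C=\Gamma_C$); (4) $G_C$ is a symmetric graph (i.e. $\overline{G}_C=G_C$).
   Context: For digits $0\le d_j<b$, $(d_k,\ldots,d_0)_b=\sum_j d_jb^j$ (leading zeros allowed). For a permutation $\sigma$ of $\{0,\ldots,k\}$, $(d_k,\ldots,d_0)_b$ is an $(n,b,\sigma)$-permutiple if $(d_k,\ldots,d_0)_b=n\cdot(d_{\sigma(k)},\ldots,d_{\sigma(0)})_b$; an $(n,b)$-permutiple if this holds for some $\sigma$. Its graph $G_p$ is the directed graph on vertex set $\{0,\ldots,b-1\}$ with edge set $\{(d_j,d_{\sigma(j)})\mid 0\le j\le k\}$. For a directed graph $G$ on $\{0,\ldots,b-1\}$ let $\mathrm{Cl}(G)$ be the set of all $(n,b)$-permutiples $q$ with $G_q$ a subgraph of $G$. The class of a permutiple $p$ is $C=\mathrm{Cl}(G_p)$, with graph $G_C=G_p$. For a digit $d$ put $\overline d=b-1-d$, for a state $c\in\{0,\dots,n-1\}$ put $\overline c=n-1-c$. The reflection $\overline G$ of a graph $G$ on $\{0,\ldots,b-1\}$ has edges $(\overline d_1,\overline d_2)$ for edges $(d_1,d_2)$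 of $G$. With $\lambda(x)$ the least non-negative residue mod $b$, the mother graph $M$ has vertex set $\{0,\ldots,b-1\}$ and edges the pairs $(d_1,d_2)$ with $\lambda(d_1+(b-n)d_2)\le n-1$. The Hoey-Sloane graph $\Gamma$ is the edge-labelled directed graph on states $\{0,\ldots,n-1\}$ where $(c_1,c_2)$ is an edge labelled by every edge $(d_1,d_2)$ of $M$ with $nd_2-d_1+c_1=bc_2$ (an edge exists iff such a label exists). The cycle image of a directed cycle $C_0$ of $M$ is the edge-labelled subgraph of $\Gamma$ with edges the $(c_1,c_2)$ for which $\{(d_1,d_2)\in C_0\mid nd_2-d_1+c_1=bc_2\}\neq\emptyset$, labelled by this set, and vertices their endpoints. $\Gamma_C$ is the union of the cycle images of the directed cycles contained in $G_C$. The reflection of an edge-labelled subgraph of $\Gamma$ replaces each vertex $c$ by $\overline c$, each edge $(c_1,c_2)$ by $(\overline c_1,\overline c_2)$, and each label $(d_1,d_2)$ by $(\overline d_1,\overline d_2)$. When $n-1$ is a vertex of $\Gamma_C$, there is an $(n,b)$-permutiple with graph $\overline{G}_C$, and the reflection of $C$ is the class $\overline{C}=\mathrm{Cl}(\overline{G}_C)$ (with graph $\overline{G}_C$); $C$ is a symmetric class if $C=\overline{C}$. The symmetric closure of $C$ is the permutiple class $\widehat{C}$ with graph $G_C\cup\overline{G}_C$, i.e. $\widehat C=\mathrm{Cl}(G_C\cup\overline{G}_C)$; it is a symmetric class if it equals its reflection, the class with graph $\overline{G_C\cup\overline{G}_C}$. *)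

(* Defs.v *)
(* digits, states, graphs are naturals; graphs on the vertex
   set {0,...,b-1} are boolean relations on nat whose edges lie in [0,b)^2. *)
From mathcomp Require Import all_boot all_order.
From mathcomp Require Import perm.

Set Implicit Arguments.
Unset Strict Implicit.
Unset Printing Implicit Defensive.

(* A candidate permutiple: digits (d_k,...,d_0) together with a permutation
   sigma of {0,...,k}. *)
Record pdata := PData {
  pk : nat;
  pd : 'I_pk.+1 -> nat;
  psig : {perm 'I_pk.+1} }.
Arguments pd : clear implicits.
Arguments psig : clear implicits.

Definition digval (b k : nat) (d : 'I_k.+1 -> nat) : nat :=
  \sum_(j < k.+1) d j * b ^ j.

Definition is_permutiple (n b : nat) (q : pdata) : Prop :=
  (forall j, pd q j < b) /\
  digval b (pd q) = n * digval b (fun j => pd q (psig q j)).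

Definition Gp (q : pdata) : rel nat :=
  fun x y => [exists j : 'I_(pk q).+1, (pd q j == x) && (pd q (psig q j) == y)].

Definition subgraph (G H : rel nat) : Prop := forall x y, G x y -> H x y.

Definition unionG (G H : rel nat) : rel nat := fun x y => G x y || H x y.

Definition reflG (b : nat) (G : rel nat) : rel nat :=
  fun x y => [&& x < b, y < b & G (b - 1 - x) (b - 1 - y)].

Definition Cl (n b : nat) (G : rel nat) (q : pdata) : Prop :=
  is_permutiple n b q /\ subgraph (Gp q) G.

Definition mother (n b : nat) : rel nat :=
  fun d1 d2 => [&& d1 < b, d2 < b & (d1 + (b - n) * d2) %% b <= n - 1].

(* a directed cycle (loops allowed) in G, given by its distinct vertices
   c = [:: v_0; ...; v_{m-1}], with edges (v_i, v_{i+1 mod m}) *)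
Definition dcycle (G : rel nat) (c : seq nat) : bool :=
  [&& c != [::], uniq c & cycle G c].

Definition cedge (c : seq nat) (x y : nat) : bool := (x \in c) && (y == next c x).

(* Gamma_G: union of the cycle images of the directed cycles of M contained
   in G.  Gamma n b G c1 c2 d1 d2 holds iff (c1,c2) is an edge of Gamma_G
   carrying the label (d1,d2). *)
Definition Gamma (n b : nat) (G : rel nat) (c1 c2 d1 d2 : nat) : Prop :=
  [/\ c1 < n, c2 < n &
   exists c : seq nat,
     [/\ dcycle (mother n b) c, cycle G c, cedge c d1 d2 &
         n * d2 + c1 = b * c2 + d1]].

Definition Gamma_vertex (n b : nat) (G : rel nat) (s : nat) : Prop :=
  exists t d1 d2, Gamma n b G s t d1 d2 \/ Gamma n b G t s d1 d2.

Definition Gamma_refl (n b : nat) (G : rel nat) (c1 c2 d1 d2 : nat) : Prop :=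
  [/\ c1 < n, c2 < n, d1 < b, d2 < b &
      Gamma n b G (n - 1 - c1) (n - 1 - c2) (b - 1 - d1) (b - 1 - d2)].

Definition same_class (P Q : pdata -> Prop) : Prop := forall q, P q <-> Q q.

(* the class Cl(G) with graph G is a symmetric class: its reflection is
   defined (n-1 is a vertex of Gamma_G) and Cl(G) = Cl(reflection of G) *)
Definition symmetric_class (n b : nat) (G : rel nat) : Prop :=
  Gamma_vertex n b G (n - 1) /\ same_class (Cl n b G) (Cl n b (reflG b G)).

(* Main.v *)
Require Import Defs.
From mathcomp Require Import all_boot all_order.
From mathcomp Require Import perm.
From mathcomp Require Import zify.
Set Implicit Arguments. Unset Strict Implicit. Unset Printing Implicit Defensive.

Lemma uniq_carry n b x y c c1 u v : c < b -> c1 < b ->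
  x + b*u = c + n*y -> n*y + c1 = b*v + x -> c = c1 /\ u = v.
Proof.
move=> hc hc1 e1 e2.
have E: b*u + c1 = c + b*v by lia.
case: (ltngtP u v) => h.
- have: b*u.+1 <= b*v by rewrite leq_mul2l h orbT. lia.
- have: b*v.+1 <= b*u by rewrite leq_mul2l h orbT. lia.
- subst; lia.
Qed.

Lemma carry_bound n b x y c c1 : 0 < n -> x < b -> y < b -> c < n -> x + b*c1 = c + n*y -> c1 < n.
Proof.
move=> h0 hx hy hc e. rewrite ltnNge; apply/negP => h.
have: b*n <= b*c1 by rewrite leq_mul2l h orbT.
have: n*y <= n*b.-1 by rewrite leq_mul2l; apply/orP; right; lia.
have: n * b.-1 + n = n*b by move: hx; case: (b) => // b1 _ /=; rewrite mulnS; lia.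
lia.
Qed.

Lemma mother_eq n b x y c1 c2 : n <= b -> x < b -> y < b -> c1 < n -> 
  n*y + c1 = b*c2 + x -> x + (b-n)*y = (y - c2)*b + c1.
Proof.
move=> hnb hx hy hc e.
have hc2 : c2 <= y.
  rewrite leqNgt; apply/negP => h.
  have: b*y.+1 <= b*c2 by rewrite leq_mul2l h orbT.
  have: n*y <= b*y by rewrite leq_mul2r hnb orbT.
  lia.
rewrite !mulnBl.
have: b*c2 <= b*y by rewrite leq_mul2l hc2 orbT.
have: n*y <= b*y by rewrite leq_mul2r hnb orbT.
lia.
Qed.

Lemma refl_eq n b x y c1 c2 : x < b -> y < b -> c1 < n -> c2 < n ->
  n*y + c1 = b*c2 + x -> n*(b-1-y) + (n-1-c1) = b*(n-1-c2) + (b-1-x).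
Proof. move=> *; nia. Qed.

Definition valL (b : nat) (s : seq nat) : nat := foldr (fun x acc => x + b * acc) 0 s.

Fixpoint walk (n b : nat) (c : nat) (L : seq (nat*nat)) (c' : nat) {struct L} : Prop :=
  if L is (x,y)::L' then exists c1, [/\ c1 < n, x + b*c1 = c + n*y & walk n b c1 L' c']
  else c = c'.

Definition dig_ok (b : nat) (L : seq (nat*nat)) := all (fun e => (e.1 < b) && (e.2 < b)) L.

Lemma walk_val n b c L c' : walk n b c L c' ->
  valL b (map fst L) + b ^ (size L) * c' = c + n * valL b (map snd L).
Proof.
elim: L c => [|[x y] L IH] c /=; first by move=> ->; rewrite expn0; lia.
case=> c1 [_ e /IH e2]. rewrite expnS -mulnA mulnDr -addnA -mulnDr e2. nia.
Qed.

Lemma val_walk n b c L c' : 0 < n -> n < b -> c < n -> dig_ok b L ->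
  valL b (map fst L) + b ^ (size L) * c' = c + n * valL b (map snd L) -> walk n b c L c'.
Proof.
move=> n0 nb.
elim: L c => [|[x y] L IH] c /=; first by rewrite expn0; lia.
move=> hc /andP[/andP[hx hy] hL] e.
set V1 := valL b (map fst L) in e *; set V2 := valL b (map snd L) in e *.
have hm : (c + n*y) %% b = x.
  have: (x + b * (V1 + b^(size L) * c')) %% b = x by rewrite addnC mulnC modnMDl modn_small.
  have ->: x + b * (V1 + b^(size L) * c') = x + b * V1 + b ^ (size L).+1 * c' by rewrite expnS; nia.
  rewrite e. have ->: c + n * (y + b * V2) = (c + n*y) + b * (n*V2) by nia.
  by rewrite [in X in X %% b = _ -> _]addnC [in X in X %% b = _ -> _]mulnC modnMDl.
have ed := divn_eq (c + n*y) b. rewrite hm in ed.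
exists ((c + n*y) %/ b); split.
- apply: (@carry_bound n b x y c) => //; lia.
- lia.
- apply: IH => //.
  + apply: (@carry_bound n b x y c) => //; lia.
  + have hb : 0 < b by lia.
    apply/eqP; rewrite -(eqn_pmul2l hb); apply/eqP.
    move: e; rewrite expnS; set q := (c + n*y) %/ b in ed *. nia.
Qed.

Lemma walk_cat n b c L1 L2 c'' :
  walk n b c (L1 ++ L2) c'' <-> exists c', walk n b c L1 c' /\ walk n b c' L2 c''.
Proof.
elim: L1 c => [|[x y] L1 IH] c /=.
  by split; [move=> h; exists c | case=> c' [-> h]].
split.
- case=> c1 [h1 h2 /IH [c' [w1 w2]]]; exists c'; split; last exact: w2. by exists c1.
- case=> c' [[c1 [h1 h2 w1]] w2]; exists c1; split => //; apply/IH; by exists c'.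
Qed.

Lemma walk_lt n b c L c' : walk n b c L c' -> c < n -> c' < n.
Proof.
elim: L c => [|[x y] L IH] c /=; first by move=> ->.
by case=> c1 [h1 _ w] _; apply: (IH c1).
Qed.

Definition rf (b : nat) (e : nat * nat) := (b - 1 - e.1, b - 1 - e.2).

Lemma walk_refl n b c L c' : walk n b c L c' -> c < n -> dig_ok b L ->
  walk n b (n - 1 - c) (map (rf b) L) (n - 1 - c').
Proof.
elim: L c => [|[x y] L IH] c /=; first by move=> ->.
case=> c1 [h1 e w] hc /andP[/andP[hx hy] hL].
exists (n - 1 - c1); split; first lia.
- have := @refl_eq n b x y c c1 hx hy hc h1. lia.
- exact: IH.
Qed.

Lemma sum_valL b m (F : 'I_m -> nat) :
  \sum_(j < m) F j * b ^ j = valL b (map F (enum 'I_m)).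
Proof.
elim: m F => [|m IH] F; first by rewrite big_ord0 enum_ord0.
rewrite big_ord_recl enum_ordSl /= -map_comp -IH expn0 muln1 big_distrr /=.
congr (_ + _); apply: eq_bigr => j _; rewrite expnS /=; lia.
Qed.

Definition Lp (p : pdata) : seq (nat * nat) :=
  map (fun j => (pd p j, pd p (psig p j))) (enum 'I_(pk p).+1).

Lemma Gp_Lp p x y : Gp p x y = ((x, y) \in Lp p).
Proof.
apply/existsP/mapP => [[j /andP[/eqP <- /eqP <-]]|[j _ [-> ->]]].
  by exists j; rewrite ?mem_enum.
by exists j; rewrite !eqxx.
Qed.

Lemma Lp_props n b p : is_permutiple n b p ->
  [/\ dig_ok b (Lp p), perm_eq (map fst (Lp p)) (map snd (Lp p)) &
      valL b (map fst (Lp p)) = n * valL b (map snd (Lp p))].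
Proof.
case=> hd hv.
have e1 : map fst (Lp p) = map (pd p) (enum 'I_(pk p).+1) by rewrite /Lp -map_comp.
have e2 : map snd (Lp p) = map (fun j => pd p (psig p j)) (enum 'I_(pk p).+1)
  by rewrite /Lp -map_comp.
split.
- by apply/allP => e /mapP [j _ ->] /=; rewrite !hd.
- rewrite e1 e2 (map_comp (pd p) (psig p)) perm_map // perm_sym.
  apply: uniq_perm; first by rewrite (map_inj_uniq perm_inj) enum_uniq.
    exact: enum_uniq.
  move=> i; rewrite mem_enum -{1}(permKV (psig p) i) mem_map ?mem_enum //.
  exact: perm_inj.
- by rewrite e1 e2 -!sum_valL.
Qed.

Lemma build_q n b L : L != [::] -> dig_ok b L -> perm_eq (map fst L) (map snd L) ->
  valL b (map fst L) = n * valL b (map snd L) ->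
  exists q, is_permutiple n b q /\ forall x y, Gp q x y = ((x, y) \in L).
Proof.
move=> hne hd hpe hv.
set k := (size L).-1.
have hs : size (map fst L) == k.+1 by rewrite size_map /k prednK // lt0n size_eq0.
set t := Tuple hs.
have : perm_eq (map snd L) t by rewrite perm_sym.
case/tuple_permP => s hs2'.
have hs2 : map snd L = [seq tnth t (s i) | i <- enum 'I_k.+1] := hs2'.
have hfst j : tnth t j = (nth (0,0) L j).1.
  by rewrite (tnth_nth 0) /= (nth_map (0,0)) // -(size_map fst) (eqP hs).
have hsnd j : tnth t (s j) = (nth (0,0) L j).2.
  have : nth 0 (map snd L) j = nth 0 [seq tnth t (s i) | i <- enum 'I_k.+1] j by rewrite hs2.
  rewrite (nth_map (0,0)); last by rewrite -(size_map fst) (eqP hs).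
  by move=> ->; rewrite /= (nth_map ord0) ?size_enum_ord // nth_ord_enum.
exists (@PData k (fun j => tnth t j) s); split; first split.
- move=> j /=; rewrite hfst. have /allP := hd. 
  have hj : j < size L by rewrite -(size_map fst) (eqP hs).
  by move=> /(_ _ (mem_nth (0,0) hj)) /andP[].
- rewrite /digval !sum_valL /=. 
  have -> : [seq tnth t j | j <- enum 'I_k.+1] = map fst L by rewrite map_tnth_enum.
  suff -> : [seq tnth t (s j) | j <- enum 'I_k.+1] = map snd L by [].
  by rewrite hs2.
- move=> x y; rewrite /Gp /=.
  apply/existsP/idP => [[j /andP[/eqP <- /eqP <-]]|].
    rewrite hfst hsnd -surjective_pairing; apply: mem_nth.
    by rewrite -(size_map fst) (eqP hs).
  case/(nthP (0,0)) => j hj hnj.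
  have hj' : j < k.+1 by rewrite -(eqP hs) size_map.
  exists (Ordinal hj'); rewrite hfst hsnd /= hnj !eqxx //.
Qed.

Lemma walk_Lp n b p : 0 < n -> n < b -> is_permutiple n b p -> walk n b 0 (Lp p) 0.
Proof.
move=> n0 nb hp; case: (Lp_props hp) => hd _ hv.
apply: val_walk => //; lia.
Qed.

Lemma edge_walk n b L x y : walk n b 0 L 0 -> (x, y) \in L -> 0 < n ->
  exists A B c c1, [/\ L = A ++ (x, y) :: B, walk n b 0 A c, c < n, c1 < n &
                     x + b * c1 = c + n * y /\ walk n b c1 B 0].
Proof.
move=> w hin n0; case/splitPr: hin w => A B /walk_cat [c [wA /= [c1 [h1 e wB]]]].
exists A, B, c, c1; split => //; exact: (walk_lt wA).
Qed.

Lemma edge_carry n b p x y : 0 < n -> n < b -> is_permutiple n b p -> Gp p x y ->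
  exists c1 c2, [/\ c1 < n, c2 < n & n * y + c1 = b * c2 + x].
Proof.
move=> n0 nb hp; rewrite Gp_Lp => hin.
have [A [B [c [c1 [_ _ hc h1 [e _]]]]]] := edge_walk (walk_Lp n0 nb hp) hin n0.
by exists c, c1; split => //; lia.
Qed.

Lemma Gp_lt n b p x y : is_permutiple n b p -> Gp p x y -> x < b /\ y < b.
Proof.
case=> hd _ /existsP [j /andP[/eqP <- /eqP <-]]; by rewrite !hd.
Qed.

Lemma split_n1 n b L x y C1 C2 : 0 < n -> n < b -> walk n b 0 L 0 -> (x, y) \in L ->
  n * y + C1 = b * C2 + x -> C1 < n -> C2 < n -> (C1 = n - 1 \/ C2 = n - 1) ->
  exists A B, [/\ L = A ++ B, walk n b 0 A (n - 1) & walk n b (n - 1) B 0].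
Proof.
move=> n0 nb w hin e hC1 hC2 hor.
have [A [B [c [c1 [-> wA hc h1 [e1 wB]]]]]] := edge_walk w hin n0.
have [ec ec1] : c = C1 /\ c1 = C2 by apply: (@uniq_carry n b x y c C1 c1 C2); lia.
subst c c1; case: hor => hh.
- exists A, ((x, y) :: B); split => //; first by rewrite -hh.
  by rewrite -hh; exists C2; split.
- exists (rcons A (x, y)), B; rewrite cat_rcons; split => //; last by rewrite -hh.
  rewrite -cats1; apply/walk_cat; exists C1; split => //.
  by exists C2; rewrite -hh; split.
Qed.

Lemma Gamma_edge n b G c1 c2 d1 d2 : Gamma n b G c1 c2 d1 d2 -> G d1 d2.
Proof.
case=> _ _ [c [_ hc /andP[hin /eqP ->] _]]; exact: next_cycle.
Qed.

Lemma partA n b p : 1 < n -> n < b -> is_permutiple n b p ->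
  Gamma_vertex n b (Gp p) (n - 1) ->
  exists q, is_permutiple n b q /\ Gp q =2 unionG (Gp p) (reflG b (Gp p)).
Proof.
move=> n1 nb hp [t [d1 [d2 hG]]].
have n0 : 0 < n by lia.
have w := walk_Lp n0 nb hp.
have [hd hpe hv] := Lp_props hp.
set L := Lp p in w hd hpe hv.
have [A [B [eL wA wB]]] : exists A B, [/\ L = A ++ B, walk n b 0 A (n - 1) & walk n b (n - 1) B 0].
  have hin : (d1, d2) \in L by rewrite -Gp_Lp; case: hG => hG; apply: Gamma_edge hG.
  case: hG => -[hc1 hc2 [c [_ _ _ e]]].
    by apply: (split_n1 n0 nb w hin e) => //; left.
  by apply: (split_n1 n0 nb w hin e) => //; right.
have hdA : dig_ok b A by move: hd; rewrite eL /dig_ok all_cat => /andP[].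
have hdB : dig_ok b B by move: hd; rewrite eL /dig_ok all_cat => /andP[].
have wB' := walk_refl wB (ltac:(lia)) hdB.
have wA' := walk_refl wA (ltac:(lia)) hdA.
rewrite subnn in wB'; rewrite subn0 in wA'.
set L2 := L ++ map (rf b) B ++ map (rf b) A.
have w2 : walk n b 0 L2 0.
  apply/walk_cat; exists 0; split => //; apply/walk_cat; exists (n - 1); split; by rewrite ?subnn ?subn0 in wB' wA' *.
have hd2 : dig_ok b L2.
  have hr : forall S, all (fun e => (e.1 < b) && (e.2 < b)) (map (rf b) S).
    by move=> S; apply/allP => e /mapP [e' _ ->] /=; apply/andP; split; lia.
  by rewrite /dig_ok !all_cat !hr !andbT; exact: hd.
have hpe2 : perm_eq (map fst L2) (map snd L2).
  have h1 (f : nat * nat -> nat) (g : nat -> nat) (hfg : forall e, f (rf b e) = g (f e)) :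
      perm_eq (map f L2) (map f L ++ map g (map f L)).
    have e1 S : map f (map (rf b) S) = map g (map f S).
      by rewrite -!map_comp; apply: eq_map => e /=; rewrite hfg.
    rewrite /L2 !map_cat perm_cat2l !e1 -!map_cat.
    by do 2 apply: perm_map; rewrite eL perm_catC.
  rewrite (permPl (h1 fst (fun x => b - 1 - x) (fun e => erefl))).
  rewrite (permPr (h1 snd (fun x => b - 1 - x) (fun e => erefl))).
  by apply: perm_cat => //; apply: perm_map.
have hv2 : valL b (map fst L2) = n * valL b (map snd L2).
  by have := walk_val w2; rewrite muln0 addn0 add0n.
have hne : L2 != [::].
  by rewrite /L2 -size_eq0 size_cat /L /Lp size_map size_enum_ord.
have [q [hq hGq]] := build_q hne hd2 hpe2 hv2.
exists q; split => // x y; rewrite hGq /unionG /reflG Gp_Lp -/L /L2 !mem_cat.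
have -> : ((x, y) \in map (rf b) B) || ((x, y) \in map (rf b) A) = ((x, y) \in map (rf b) L).
  by rewrite eL map_cat mem_cat orbC.
congr (_ || _); apply/mapP/idP => [[[u v] huv [-> ->]]|/and3P[hx hy hin]].
  have /allP /(_ _ huv) /andP[/= hu hv'] := hd.
  have -> : b - 1 - (b - 1 - u) = u by lia.
  have -> : b - 1 - (b - 1 - v) = v by lia.
  rewrite Gp_Lp -/L huv andbT; apply/andP; split; lia.
exists (b - 1 - x, b - 1 - y); first by rewrite -Gp_Lp.
 rewrite /rf /=; congr pair; lia.
Qed.

Lemma mother_of_carry n b x y c1 c2 : n < b -> x < b -> y < b -> c1 < n ->
  n * y + c1 = b * c2 + x -> mother n b x y.
Proof.
move=> nb hx hy hc e; rewrite /mother hx hy /=.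
rewrite (@mother_eq n b x y c1 c2) //; last lia.
rewrite modnMDl modn_small; lia.
Qed.

Lemma mother_carry n b x y : 0 < n -> n < b -> mother n b x y ->
  [/\ x < b, y < b & exists c1 c2, [/\ c1 < n, c2 < n & n * y + c1 = b * c2 + x]].
Proof.
move=> n0 nb /and3P[hx hy hm]; split => //.
set c1 := (x + (b - n) * y) %% b in hm.
have ed := divn_eq (x + (b - n) * y) b.
set q := (x + (b - n) * y) %/ b in ed.
have hq : q <= y.
  rewrite leqNgt; apply/negP => h.
  have: y.+1 * b <= q * b by rewrite leq_mul2r h orbT.
  have: (b - n) * y <= b * y by rewrite leq_mul2r leq_subr orbT.
  lia.
have hc1 : c1 < n by lia.
have e : n * y + c1 = b * (y - q) + x.
  move: ed; rewrite !mulnBl mulnBr.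
  have: q * b <= y * b by rewrite leq_mul2r hq orbT.
  have: n * y <= b * y by rewrite leq_mul2r ltnW ?orbT.
  lia.
exists c1, (y - q); split => //.
apply: (@carry_bound n b x y c1) => //; lia.
Qed.

Lemma mother_refl n b x y : 0 < n -> n < b -> mother n b x y ->
  mother n b (b - 1 - x) (b - 1 - y).
Proof.
move=> n0 nb /(mother_carry n0 nb) [hx hy [c1 [c2 [h1 h2 e]]]].
apply: (@mother_of_carry n b _ _ (n - 1 - c1) (n - 1 - c2)); try lia.
exact: refl_eq.
Qed.

Definition rfl (b x : nat) := if x < b then b - 1 - x else x.

Lemma rfl_inj b : injective (rfl b).
Proof.
move=> x y; rewrite /rfl; case: ifP => hx; case: ifP => hy; lia.
Qed.

Lemma rfl_lt b x : x < b -> rfl b x = b - 1 - x.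
Proof. by rewrite /rfl => ->. Qed.

Lemma cycle_mem_lt n b c x : cycle (mother n b) c -> x \in c -> x < b.
Proof. by move=> hc hx; have /and3P[] := next_cycle hc hx. Qed.

Lemma Gamma_refl_lemma n b (G : rel nat) c1 c2 d1 d2 : 1 < n -> n < b ->
  (forall x y, x < b -> y < b -> G x y -> G (b - 1 - x) (b - 1 - y)) ->
  Gamma n b G c1 c2 d1 d2 ->
  [/\ d1 < b, d2 < b & Gamma n b G (n - 1 - c1) (n - 1 - c2) (b - 1 - d1) (b - 1 - d2)].
Proof.
move=> n1 nb hG [hc1 hc2 [c [/and3P[hne hu hm] hcG /andP[hin /eqP hnx] e]]].
have hlt := cycle_mem_lt hm.
have hd1 : d1 < b by apply: hlt.
have hd2 : d2 < b by apply: hlt; rewrite hnx mem_next.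
split => //; split; try lia.
exists (map (rfl b) c); split.
- rewrite /dcycle; apply/and3P; split.
  + by case: (c) hne.
  + by rewrite (map_inj_uniq (@rfl_inj b)).
  + rewrite cycle_map; apply: (sub_in_cycle (P := fun x => x < b)) hm; last by apply/allP.
    move=> x y hx hy /=; rewrite !rfl_lt //; apply: mother_refl; lia.
- rewrite cycle_map; apply: (sub_in_cycle (P := fun x => x < b)) hcG; last by apply/allP.
  by move=> x y hx hy /=; rewrite !rfl_lt //; apply: hG.
- rewrite /cedge -(rfl_lt hd1) map_f //= (next_map (@rfl_inj b)) // -hnx rfl_lt //.
- exact: (@refl_eq n b d1 d2 c1 c2).
Qed.

Lemma Gp_mother n b p : 1 < n -> n < b -> is_permutiple n b p ->
  subrel (Gp p) (mother n b).
Proof.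
move=> n1 nb hp u v huv; have n0 : 0 < n by lia.
have [hu hv] := Gp_lt hp huv.
have [c1 [c2 [h1 h2 e]]] := edge_carry n0 nb hp huv.
exact: (mother_of_carry nb hu hv h1 e).
Qed.

Lemma gamma_of_edge n b p x y : 1 < n -> n < b -> is_permutiple n b p -> Gp p x y ->
  exists c1 c2, Gamma n b (Gp p) c1 c2 x y.
Proof.
move=> n1 nb hp hxy; have hxy0 := hxy; have n0 : 0 < n by lia.
case/existsP: hxy => j /andP[/eqP hx /eqP hy].
have hc : fconnect (psig p) (psig p j) j.
  by rewrite (fconnect_sym (@perm_inj _ (psig p))) fconnect1.
case/connectP: hc => ps hps hlast.
have hP : path (Gp p) y (map (pd p) ps).
  rewrite -hy path_map; apply: sub_path hps => i i' /eqP <- /=.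
  by apply/existsP; exists i; rewrite !eqxx.
have hl : last y (map (pd p) ps) = x by rewrite -hy last_map -hlast hx.
case: (shortenP hP) hl => P' hP' hu _ hl'.
have [c1 [c2 [h1 h2 e]]] := edge_carry n0 nb hp hxy0.
have hcyc : cycle (Gp p) (y :: P') by rewrite /= rcons_path hP' hl'.
exists c1, c2; split => //; exists (y :: P'); split => //.
- apply/and3P; split => //; exact: (sub_cycle (Gp_mother n1 nb hp)).
- rewrite /cedge -hl' mem_last andTb next_nth mem_last index_last // /=.
  by rewrite nth_default.
Qed.

Section Refl.
Variables (b : nat) (G : rel nat).
Hypothesis hGlt : forall x y, G x y -> x < b /\ y < b.

Lemma reflG_U : reflG b (unionG G (reflG b G)) =2 unionG G (reflG b G).
Proof.
move=> x y; rewrite /reflG /unionG.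
case: (boolP (x < b)) => hx; case: (boolP (y < b)) => hy /=;
  last 3 first.
- by case: (boolP (G x y)) => // /hGlt [] ; lia.
- by case: (boolP (G x y)) => // /hGlt [] ; lia.
- by case: (boolP (G x y)) => // /hGlt [] ; lia.
have -> : b - 1 - (b - 1 - x) = x by lia.
have -> : b - 1 - (b - 1 - y) = y by lia.
have -> : b - 1 - x < b by lia.
have -> : b - 1 - y < b by lia.
by rewrite orbC.
Qed.

Lemma sub_sym : subrel G (reflG b G) -> G =2 reflG b G.
Proof.
move=> h x y; apply/idP/idP; first exact: h.
case/and3P => hx hy /h /and3P [_ _].
have -> : b - 1 - (b - 1 - x) = x by lia.
by have -> : b - 1 - (b - 1 - y) = y by lia.
Qed.

Lemma sub_sym' : subrel (reflG b G) G -> G =2 reflG b G.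
Proof.
move=> h; apply: sub_sym => x y hG; have [hx hy] := hGlt hG.
rewrite /reflG hx hy /=; apply: h; rewrite /reflG.
have -> : b - 1 - (b - 1 - x) = x by lia.
have -> : b - 1 - (b - 1 - y) = y by lia.
rewrite hG andbT; apply/andP; split; lia.
Qed.
End Refl.

Lemma Cl_congr n b (G1 G2 : rel nat) : G1 =2 G2 -> same_class (Cl n b G1) (Cl n b G2).
Proof.
move=> h q; split; case=> hq hs; split => // x y /hs; by rewrite h.
Qed.

Lemma Gamma_mono n b (G1 G2 : rel nat) c1 c2 d1 d2 : subrel G1 G2 ->
  Gamma n b G1 c1 c2 d1 d2 -> Gamma n b G2 c1 c2 d1 d2.
Proof.
move=> h [h1 h2 [c [hd hc hce e]]]; split => //; exists c; split => //.
exact: sub_cycle hc.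
Qed.

Theorem theorem18 (n b : nat) (p : pdata) :
  1 < n -> n < b ->
  is_permutiple n b p ->
  Gamma_vertex n b (Gp p) (n - 1) ->
  ((exists q : pdata, is_permutiple n b q /\
      Gp q =2 unionG (Gp p) (reflG b (Gp p))) /\
   symmetric_class n b (unionG (Gp p) (reflG b (Gp p)))) /\
  ((symmetric_class n b (Gp p) <->
      same_class (Cl n b (Gp p)) (Cl n b (unionG (Gp p) (reflG b (Gp p))))) /\
   (same_class (Cl n b (Gp p)) (Cl n b (unionG (Gp p) (reflG b (Gp p)))) <->
      (forall c1 c2 d1 d2,
         Gamma n b (Gp p) c1 c2 d1 d2 <-> Gamma_refl n b (Gp p) c1 c2 d1 d2)) /\
   ((forall c1 c2 d1 d2,
         Gamma n b (Gp p) c1 c2 d1 d2 <-> Gamma_refl n b (Gp p) c1 c2 d1 d2) <->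
      Gp p =2 reflG b (Gp p))).
Proof.
move=> n1 nb hp hv.
have hGlt : forall x y, Gp p x y -> x < b /\ y < b by move=> x y; exact: Gp_lt hp.
have [q [hq hGq]] := partA n1 nb hp hv.
have hpCl : Cl n b (Gp p) p by split.
have h24 : same_class (Cl n b (Gp p)) (Cl n b (unionG (Gp p) (reflG b (Gp p)))) <->
           Gp p =2 reflG b (Gp p).
  split.
  - move=> hs; apply: sub_sym' => // x y hR.
    have [_ hsub] : Cl n b (Gp p) q by apply/hs; split => // u v; rewrite hGq.
    by apply: hsub; rewrite hGq /unionG hR orbT.
  - move=> hsym; apply: Cl_congr => x y; rewrite /unionG -hsym orbb //.
have hGsym : Gp p =2 reflG b (Gp p) ->
    forall x y, x < b -> y < b -> Gp p x y -> Gp p (b - 1 - x) (b - 1 - y).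
  by move=> hsym x y hx hy; rewrite hsym => /and3P[].
have h34 : (forall c1 c2 d1 d2,
         Gamma n b (Gp p) c1 c2 d1 d2 <-> Gamma_refl n b (Gp p) c1 c2 d1 d2) <->
      Gp p =2 reflG b (Gp p).
  split.
  - move=> h; apply: sub_sym' => // x y /and3P[hx hy hG'].
    have [c1 [c2 hg]] := gamma_of_edge n1 nb hp hG'.
    have [hc1 hc2 _] := hg.
    have : Gamma_refl n b (Gp p) (n - 1 - c1) (n - 1 - c2) x y.
      split; try lia.
      have -> : n - 1 - (n - 1 - c1) = c1 by lia.
      by have -> : n - 1 - (n - 1 - c2) = c2 by lia.
    by move/h; apply: Gamma_edge.
  - move=> hsym c1 c2 d1 d2; split.
    + move=> hg; have [hc1 hc2 _] := hg.
      have [hd1 hd2 hg'] := Gamma_refl_lemma n1 nb (hGsym hsym) hg.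
      by split.
    + case=> h1 h2 h3 h4 hg.
      have [_ _ hg'] := Gamma_refl_lemma n1 nb (hGsym hsym) hg.
      move: hg'.
      have -> : n - 1 - (n - 1 - c1) = c1 by lia.
      have -> : n - 1 - (n - 1 - c2) = c2 by lia.
      have -> : b - 1 - (b - 1 - d1) = d1 by lia.
      by have -> : b - 1 - (b - 1 - d2) = d2 by lia.
have h12 : symmetric_class n b (Gp p) <->
      same_class (Cl n b (Gp p)) (Cl n b (unionG (Gp p) (reflG b (Gp p)))).
  split.
  - case=> _ hs; apply/h24; apply: sub_sym => //.
    by have [_ hsub] := (hs p).1 hpCl.
  - move=> hs; split => //; move/h24: hs => hsym; exact: Cl_congr.
split.
- split; first by exists q.
  split.
  + case: hv => t [d1 [d2 [hg|hg]]]; exists t, d1, d2; [left|right];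
      apply: Gamma_mono hg => x y h; rewrite /unionG h //.
  + apply: Cl_congr => x y; rewrite reflG_U //.
split => //; split => //.
split; [move/h24/h34 | move/h34/h24] => //.
Qed.
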